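(* Let $A,B$ be persistence diagrams with $A$ nonempty, let $d_0=\min\{d_\infty(A,B),d_\infty(D_0,B)\}$, $c_{\min}=\max\{0,(\mathrm{pers}(B)-d_0)/\mathrm{pers}(A)\}$, $c_{\max}=(\mathrm{pers}(B)+d_0)/\mathrm{pers}(A)$, let $N\ge1$, and let $t_i=c_{\min}+\tfrac{i}{N}(c_{\max}-c_{\min})$ for $i=0,\dots,N$. Set $\widehat{d_D}(A,B)=\min_{0\le i\le N}d_\infty(t_iA,B)$. Then $$0\le \widehat{d_D}(A,B)-\overline{d_D}(A,B)\le \frac{2d_0\,\mathrm{bd}(A)}{N\,\mathrm{pers}(A)}.$$
   Context: A persistence diagram is a finite multiset of points $a=(a_x,a_y)$ with $0\le a_x<a_y<\infty$ together with the diagonal $\Delta$ of infinite multiplicity; $D_0$ is the empty diagram. $d_\infty$ is the bottleneck distance. $cA=\{(ca_x,ca_y)\}$ for $c>0$ and $0A=D_0$. $\overline{d_D}(A,B)=\inf_{c\ge0}d_\infty(cA,B)$. $\mathrm{pers}(a)=(a_y-a_x)/2$, $\mathrm{pers}(A)=\max_{a\in A}\mathrm{pers}(a)$, and $\mathrm{bd}(A)=\max_{a\in A}\|a\|_\infty=\max_{a\in A}a_y$. *)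

(* Defs.v *)
From HB Require Import structures.
From mathcomp Require Import all_boot all_order all_algebra.
From mathcomp Require Import all_classical all_reals.
Set Implicit Arguments. Unset Strict Implicit. Unset Printing Implicit Defensive.
Import Order.TTheory GRing.Theory Num.Theory.
Local Open Scope ring_scope.
Local Open Scope classical_set_scope.

Section PD.
Variable R : realType.

Definition pt := (R * R)%type.

(* A persistence diagram: a finite multiset (list) of off-diagonal points with
   0 <= a_x < a_y; the diagonal (infinite multiplicity) is implicit. *)
Definition is_pd (A : seq pt) : bool := all (fun a => (0 <= a.1) && (a.1 < a.2)) A.

Definition D0 : seq pt := [::].

Definition linf (a b : pt) : R := Num.max `|a.1 - b.1| `|a.2 - b.2|.

Definition pers_pt (a : pt) : R := (a.2 - a.1) / 2.

Definition pers (A : seq pt) : R := \big[Num.max/0]_(a <- A) pers_pt a.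
Definition bd (A : seq pt) : R := \big[Num.max/0]_(a <- A) a.2.

Definition scale (c : R) (A : seq pt) : seq pt :=
  if c == 0 then D0 else map (fun a => (c * a.1, c * a.2)) A.

(* partial matchings between the off-diagonal points of A and of B;
   unmatched points are matched to the diagonal (cost pers = l_inf distance
   to the diagonal). *)
Definition partial_inj (n m : nat) (f : 'I_n -> option 'I_m) : Prop :=
  forall i i' j, f i = Some j -> f i' = Some j -> i = i'.

Definition matching_cost (A B : seq pt)
    (f : 'I_(size A) -> option 'I_(size B)) : R :=
  Num.max
    (\big[Num.max/0]_(i < size A)
        match f i with
        | Some j => linf (nth (0,0) A i) (nth (0,0) B j)
        | None => pers_pt (nth (0,0) A i)
        end)
    (\big[Num.max/0]_(j < size B | [forall i, f i != Some j])
        pers_pt (nth (0,0) B j)).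

Definition d_inf (A B : seq pt) : R :=
  inf [set matching_cost f | f in [set f : 'I_(size A) -> option 'I_(size B) |
                                       partial_inj f]].

Definition dbar (A B : seq pt) : R :=
  inf [set d_inf (scale c A) B | c in [set c : R | 0 <= c]].

Definition d0 (A B : seq pt) : R := Num.min (d_inf A B) (d_inf D0 B).
Definition cmin (A B : seq pt) : R := Num.max 0 ((pers B - d0 A B) / pers A).
Definition cmax (A B : seq pt) : R := (pers B + d0 A B) / pers A.
Definition tgrid (A B : seq pt) (N i : nat) : R :=
  cmin A B + (i%:R / N%:R) * (cmax A B - cmin A B).
Definition dhat (A B : seq pt) (N : nat) : R :=
  \big[Num.min/d_inf (scale (tgrid A B N 0) A) B]_(i < N.+1)
     d_inf (scale (tgrid A B N i) A) B.

End PD.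

(* Main.v *)
Require Import Defs.
From HB Require Import structures.
From mathcomp Require Import all_boot all_order all_algebra.
From mathcomp Require Import all_classical all_reals.
From mathcomp Require Import lra ring.
Set Implicit Arguments. Unset Strict Implicit. Unset Printing Implicit Defensive.
Import Order.TTheory GRing.Theory Num.Theory.
Local Open Scope ring_scope.
Local Open Scope classical_set_scope.

Section Aux.
Variable R : realType.
Implicit Types (X B A : seq (pt R)).
Notation mt X B := ('I_(size X) -> option 'I_(size B)).

Lemma seqmax_ge (T : eqType) (s : seq T) (F : T -> R) x :
  x \in s -> F x <= \big[Num.max/0]_(a <- s) F a.
Proof.
elim: s => //= y s IH; rewrite inE big_cons => /orP[/eqP->|/IH h].
  by rewrite le_max lexx.
by rewrite le_max h orbT.
Qed.

Lemma seqmax_ge0 (T : Type) (s : seq T) (F : T -> R) :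
  0 <= \big[Num.max/0]_(a <- s) F a.
Proof. by elim: s => [|y s IH]; rewrite ?big_nil // big_cons le_max IH orbT. Qed.

Lemma pers_ord X : pers X = \big[Num.max/0]_(i < size X) pers_pt (nth (0,0) X i).
Proof. by rewrite /pers (big_nth (0,0)) big_mkord. Qed.

Lemma pers_nth X (i : nat) : (i < size X)%N -> pers_pt (nth (0,0) X i) <= pers X.
Proof. by move=> h; apply: seqmax_ge; exact: mem_nth. Qed.

Lemma pers_ge0 X : 0 <= pers X.
Proof. exact: seqmax_ge0. Qed.

Lemma pers_lip (a b : pt R) : pers_pt a <= pers_pt b + linf a b.
Proof.
rewrite /pers_pt /linf.
have h1 : a.2 - b.2 <= `|a.2 - b.2| by exact: ler_norm.
have h2 : - (a.1 - b.1) <= `|a.1 - b.1| by rewrite -normrN ler_norm.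
have h3 : `|a.1 - b.1| <= Num.max `|a.1 - b.1| `|a.2 - b.2| by rewrite le_max lexx.
have h4 : `|a.2 - b.2| <= Num.max `|a.1 - b.1| `|a.2 - b.2| by rewrite le_max lexx orbT.
lra.
Qed.

Lemma linf_sym (a b : pt R) : linf a b = linf b a.
Proof. by rewrite /linf (distrC a.1) (distrC a.2). Qed.

Lemma linf_tri (a b c : pt R) : linf a c <= linf a b + linf b c.
Proof.
rewrite /linf ge_max; apply/andP; split.
  apply: le_trans (ler_distD b.1 _ _) _; apply: lerD; by rewrite le_max lexx.
apply: le_trans (ler_distD b.2 _ _) _; apply: lerD; by rewrite le_max lexx ?orbT.
Qed.

Lemma cost_ge0 X B (f : mt X B) : 0 <= @matching_cost R X B f.
Proof. by rewrite /matching_cost le_max seqmax_ge0. Qed.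

Lemma cost_termA X B (f : mt X B) (i : 'I_(size X)) :
  match f i with
  | Some j => linf (nth (0,0) X i) (nth (0,0) B j)
  | None => pers_pt (nth (0,0) X i) end <= @matching_cost R X B f.
Proof.
rewrite /matching_cost le_max; apply/orP; left.
exact: (le_bigmax _ (fun i : 'I_(size X) => match f i with
  | Some j => linf (nth (0,0) X i) (nth (0,0) B j)
  | None => pers_pt (nth (0,0) X i) end)).
Qed.

Lemma cost_termB X B (f : mt X B) (j : 'I_(size B)) : [forall i, f i != Some j] ->
  pers_pt (nth (0,0) B j) <= @matching_cost R X B f.
Proof.
move=> h; rewrite /matching_cost le_max; apply/orP; right.
exact: (le_bigmax_cond _ (fun j : 'I_(size B) => pers_pt (nth (0,0) B j)) h).
Qed.

Definition costs X B := [set @matching_cost R X B f | f in [set f : 'I_(size X) -> option 'I_(size B) | partial_inj f]].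

Lemma costs_lb X B : has_lbound (costs X B).
Proof. by exists 0 => x [f _ <-]; exact: cost_ge0. Qed.

Lemma costs_ne X B : costs X B !=set0.
Proof. by exists (@matching_cost R X B (fun _ => None)); exists (fun _ => None). Qed.

Lemma dinf_ge0 X B : 0 <= d_inf X B.
Proof. apply: lb_le_inf; first exact: costs_ne. by move=> x [f _ <-]; exact: cost_ge0. Qed.

Lemma dinf_le X B (f : mt X B) : partial_inj f -> d_inf X B <= @matching_cost R X B f.
Proof. by move=> h; apply: ge_inf; [exact: costs_lb | exists f]. Qed.


Lemma dinf_emp X B : d_inf X B <= Num.max (pers X) (pers B).
Proof.
have hinj : partial_inj (fun _ : 'I_(size X) => (None : option 'I_(size B))) by [].
apply: le_trans (dinf_le hinj) _.
rewrite /matching_cost ge_max; apply/andP; split.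
  apply: bigmax_le; first by rewrite le_max pers_ge0.
  move=> i _ /=; rewrite le_max; apply/orP; left; exact: pers_nth.
apply: bigmax_le; first by rewrite le_max pers_ge0.
move=> i _ /=; rewrite le_max; apply/orP; right; exact: pers_nth.
Qed.

Lemma cost_lowB X B (f : mt X B) : pers B - pers X <= matching_cost f.
Proof.
suff: pers B <= pers X + matching_cost f by lra.
rewrite [pers B]pers_ord; apply: bigmax_le.
  by have := pers_ge0 X; have := cost_ge0 f; lra.
move=> j _; case: (boolP [forall i, f i != Some j]) => h.
  have := cost_termB h; have := pers_ge0 X; lra.
move/forallPn: h => [i]; rewrite negbK => /eqP fi.
have := cost_termA f i; rewrite fi.
have := pers_lip (nth (0,0) B j) (nth (0,0) X i).
have := pers_nth (ltn_ord i); rewrite linf_sym; lra.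
Qed.

Lemma cost_lowA X B (f : mt X B) : pers X - pers B <= matching_cost f.
Proof.
suff: pers X <= pers B + matching_cost f by lra.
rewrite [pers X]pers_ord; apply: bigmax_le.
  by have := pers_ge0 B; have := cost_ge0 f; lra.
move=> i _; have := cost_termA f i; case: (f i) => [j|] h.
  have := pers_lip (nth (0,0) X i) (nth (0,0) B j).
  have := pers_nth (ltn_ord j); lra.
have := pers_ge0 B; lra.
Qed.

Lemma dinf_lowB X B : pers B - pers X <= d_inf X B.
Proof. apply: lb_le_inf; first exact: costs_ne. by move=> x [f _ <-]; exact: cost_lowB. Qed.

Lemma dinf_lowA X B : pers X - pers B <= d_inf X B.
Proof. apply: lb_le_inf; first exact: costs_ne. by move=> x [f _ <-]; exact: cost_lowA. Qed.

Lemma pers_D0 : pers (D0 R) = 0.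
Proof. by rewrite /pers big_nil. Qed.

Lemma dinf_D0 B : d_inf (D0 R) B = pers B.
Proof.
apply/le_anti/andP; split.
  apply: le_trans (dinf_emp _ _) _; by rewrite pers_D0 ge_max pers_ge0 lexx.
by have := dinf_lowB (D0 R) B; rewrite pers_D0 subr0.
Qed.

Lemma dinf_lip X X' B e : size X' = size X -> 0 <= e ->
  (forall k, (k < size X)%N -> linf (nth (0,0) X' k) (nth (0,0) X k) <= e /\
     pers_pt (nth (0,0) X' k) <= pers_pt (nth (0,0) X k) + e) ->
  d_inf X' B <= d_inf X B + e.
Proof.
move=> hs he hk.
suff: d_inf X' B - e <= d_inf X B by lra.
apply: lb_le_inf; first exact: costs_ne.
move=> x [f finj <-].
pose f' : mt X' B := fun i => f (cast_ord hs i).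
have h1 : d_inf X' B <= matching_cost f'.
  apply: dinf_le => i i' j e1 e2; apply: (cast_ord_inj (eq_n:=hs)); exact: finj e1 e2.
suff: matching_cost f' <= matching_cost f + e by lra.
rewrite {1}/matching_cost ge_max; apply/andP; split.
  apply: bigmax_le; first by have := cost_ge0 f; lra.
  move=> i _; rewrite /f'; set i0 := cast_ord hs i.
  have hi : nth (0,0) X' i = nth (0,0) X' i0 by [].
  rewrite hi; have [l1 l2] := hk i0 (ltn_ord i0).
  have := cost_termA f i0; case: (f i0) => [j|] h.
    have := linf_tri (nth (0,0) X' i0) (nth (0,0) X i0) (nth (0,0) B j); lra.
  lra.
apply: bigmax_le; first by have := cost_ge0 f; lra.
move=> j /forallP h.
have hB : [forall i, f i != Some j].
  apply/forallP => i; have := h (cast_ord (esym hs) i); by rewrite /f' cast_ordKV.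
have := cost_termB hB; lra.
Qed.


Lemma pd_nth A k : is_pd A -> (k < size A)%N ->
  0 <= (nth (0,0) A k).1 /\ (nth (0,0) A k).1 < (nth (0,0) A k).2.
Proof. by move=> /allP h hk; have /andP[] := h _ (mem_nth (0,0) hk). Qed.

Lemma bd_nth A k : (k < size A)%N -> (nth (0,0) A k).2 <= bd A.
Proof. by move=> hk; apply: seqmax_ge; exact: mem_nth. Qed.

Lemma bd_ge0 A : 0 <= bd A.
Proof. exact: seqmax_ge0. Qed.

Lemma pers_le_bd A : is_pd A -> pers A <= bd A.
Proof.
move=> /allP h; rewrite /pers big_seq; apply: bigmax_le; first exact: bd_ge0.
move=> a ha; have /andP[h1 h2] := h a ha; apply: le_trans (seqmax_ge (fun a => a.2) ha).
rewrite /pers_pt; lra.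
Qed.

Lemma pers_scale c A : 0 <= c -> pers (scale c A) = c * pers A.
Proof.
move=> hc; rewrite /scale; case: eqP => [->|_]; first by rewrite pers_D0 mul0r.
rewrite /pers big_map; elim: A => [|a A IH]; first by rewrite !big_nil mulr0.
rewrite !big_cons IH maxr_pMr //; congr (Num.max _ _); rewrite /pers_pt /=; ring.
Qed.

Lemma size_scale c A : c != 0 -> size (scale c A) = size A.
Proof. by move=> hc; rewrite /scale (negbTE hc) size_map. Qed.

Lemma nth_scale c A k : c != 0 -> (k < size A)%N ->
  nth (0,0) (scale c A) k = (c * (nth (0,0) A k).1, c * (nth (0,0) A k).2).
Proof. by move=> hc hk; rewrite /scale (negbTE hc) (nth_map (0,0)). Qed.

Lemma dinf_scale_lip c c' A B : 0 <= c -> 0 <= c' -> is_pd A ->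
  d_inf (scale c' A) B <= d_inf (scale c A) B + `|c - c'| * bd A.
Proof.
move=> hc hc' hA.
have he : 0 <= `|c - c'| * bd A by rewrite mulr_ge0 ?bd_ge0.
have hpb := pers_le_bd hA; have hp0 := pers_ge0 A.
case: (eqVneq c 0) => [c0|cn0]; case: (eqVneq c' 0) => [c'0|c'n0].
- by subst c c'; lra.
- rewrite c0 /scale eqxx -/(D0 R) dinf_D0.
  apply: le_trans (dinf_emp _ _) _; rewrite -/(scale c' A) pers_scale //.
  rewrite sub0r normrN ger0_norm //.
  have : c' * pers A <= c' * bd A by rewrite ler_wpM2l.
  rewrite ge_max; have := pers_ge0 B; have := mulr_ge0 hc' (bd_ge0 A); move=> h0 h1 h2; apply/andP; split; lra.
- rewrite c'0 {1}/scale eqxx -/(D0 R) dinf_D0 subr0 ger0_norm //.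
  have := dinf_lowB (scale c A) B; rewrite pers_scale //.
  have : c * pers A <= c * bd A by rewrite ler_wpM2l.
  lra.
- apply: dinf_lip => //; first by rewrite !size_scale.
  move=> k; rewrite size_scale // => hk; rewrite !nth_scale //; have [h1 h2] := pd_nth hA hk.
  have hb := bd_nth hk.
  set a1 := (nth (0,0) A k).1 in h1 h2 hb *; set a2 := (nth (0,0) A k).2 in h2 hb *.
  have key x : 0 <= x -> `|c' * x - c * x| = `|c - c'| * x.
    by move=> hx; rewrite -mulrBl normrM distrC (ger0_norm hx).
  have hn := normr_ge0 (c - c').
  have hcc : c' - c <= `|c - c'| by rewrite distrC ler_norm.
  split.
    rewrite /linf /= ge_max !key; try lra.
    apply/andP; split; rewrite ler_wpM2l //; lra.
  rewrite /pers_pt /=.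
  have hpa : 0 <= (a2 - a1) / 2 by lra.
  have hpa2 : (a2 - a1) / 2 <= bd A by lra.
  have : (c' - c) * ((a2 - a1) / 2) <= `|c - c'| * ((a2 - a1) / 2) by rewrite ler_wpM2r.
  have : `|c - c'| * ((a2 - a1) / 2) <= `|c - c'| * bd A by rewrite ler_wpM2l.
  move=> u v.
  have -> : (c' * a2 - c' * a1) / 2 = c * ((a2 - a1) / 2) + (c' - c) * ((a2 - a1) / 2) by ring.
  have -> : (c * a2 - c * a1) / 2 = c * ((a2 - a1) / 2) by ring.
  lra.
Qed.

End Aux.

Section Main.
Variable R : realType.

Lemma grid_near (A B : seq (pt R)) (N : nat) (c : R) : (0 < N)%N ->
  cmin A B <= c -> c <= cmax A B ->
  exists i : 'I_N.+1, `|tgrid A B N i - c| <= (cmax A B - cmin A B) / N%:R.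
Proof.
move=> hN h1 h2.
have hN' : (N%:R : R) != 0 by rewrite pnatr_eq0 -lt0n.
have tS k : tgrid A B N k.+1 = tgrid A B N k + (cmax A B - cmin A B) / N%:R.
  by rewrite /tgrid mulrS; field.
have t0 : tgrid A B N 0 = cmin A B by rewrite /tgrid mul0r mul0r addr0.
have tN : tgrid A B N N = cmax A B by rewrite /tgrid divff // mul1r; ring.
suff: forall k, (k <= N)%N -> c <= tgrid A B N k ->
  exists i : 'I_N.+1, `|tgrid A B N i - c| <= (cmax A B - cmin A B) / N%:R.
  by move=> H; apply: (H N) => //; rewrite tN.
elim=> [|k IH] hk hc.
  exists ord0 => /=; rewrite t0 in hc *.
  have -> : cmin A B - c = 0 by lra.
  by rewrite normr0 divr_ge0 ?ler0n //; lra.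
case: (lerP c (tgrid A B N k)) => hck.
  by apply: IH => //; exact: ltnW.
exists (Ordinal (hk : (k.+1 < N.+1)%N)) => /=.
rewrite ger0_norm; rewrite tS in hc *; lra.
Qed.


Theorem mainTheorem5' (A B : seq (pt R)) (N : nat) :
  is_pd A -> is_pd B -> A != [::] -> (1 <= N)%N ->
  0 <= dhat A B N - dbar A B /\
  dhat A B N - dbar A B <= 2 * d0 A B * bd A / (N%:R * pers A).
Proof.
move=> hA hB hAn hN.
have hpA : 0 < pers A.
  case: A hA hAn => [|a A'] // hA _.
  have [h1 h2] := pd_nth hA (ltn0Sn (size A')).
  move: h1 h2 (pers_nth (X:=a::A') (ltn0Sn (size A'))) => /= h1 h2 h3.
  rewrite /pers_pt in h3; lra.
have hpA0 : pers A != 0 by rewrite gt_eqF.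
have hN0 : (0 : R) < N%:R by rewrite ltr0n.
have hbd := bd_ge0 A.
have hd0 : 0 <= d0 A B by rewrite /d0 le_min !dinf_ge0.
have hdA : d0 A B <= d_inf A B by rewrite /d0 ge_min lexx.
have hdB : d0 A B <= pers B by rewrite /d0 dinf_D0 ge_min lexx orbT.
have hpB := pers_ge0 B.
set pA := pers A in hpA hpA0 hpB hdA hdB *.
set d := d0 A B in hd0 hdA hdB *.
have hcm0 : 0 <= cmin A B by rewrite /cmin -/pA -/d le_max lexx.
have hcmx : (pers B - d) / pA <= cmin A B by rewrite /cmin -/pA -/d le_max lexx orbT.
have hcM0 : 0 <= cmax A B by rewrite /cmax -/pA -/d divr_ge0 //; lra.
have hcmM : cmin A B <= cmax A B.
  rewrite /cmin -/pA -/d ge_max hcM0 /cmax -/pA -/d ler_pM2r ?invr_gt0 //; lra.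
have ediff : cmax A B - (pers B - d) / pA = 2 * d / pA by rewrite /cmax -/pA -/d; field.
set cm := cmin A B in hcm0 hcmx hcmM *.
set cM := cmax A B in hcM0 hcmM ediff *.
set delta := 2 * d * bd A / (N%:R * pA).
have tge0 (i : nat) : (i <= N)%N -> 0 <= tgrid A B N i.
  move=> hi; rewrite /tgrid -/cm -/cM.
  have : 0 <= (i%:R / N%:R) * (cM - cm) by rewrite mulr_ge0 ?divr_ge0 ?ler0n //; lra.
  lra.
have inside c : cm <= c -> c <= cM -> dhat A B N <= d_inf (scale c A) B + delta.
  move=> h1 h2; have [i hi] := grid_near hN h1 h2.
  rewrite /dhat; apply: le_trans (bigmin_le _ i _) _.
  apply: le_trans (dinf_scale_lip B (c:=c) (c':=tgrid A B N i) _ _ hA) _.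
  - lra.
  - exact: tge0 (ltn_ord i).
  rewrite lerD2l distrC.
  have hh : (cM - cm) / N%:R <= 2 * d / pA / N%:R.
    by rewrite ler_pM2r ?invr_gt0 //; lra.
  have -> : delta = 2 * d / pA / N%:R * bd A by rewrite /delta; field; rewrite gt_eqF.
  apply: le_trans (_ : (cM - cm) / N%:R * bd A <= _); first by rewrite ler_wpM2r.
  by rewrite ler_wpM2r.
have hstar : dhat A B N <= d + delta.
  case: (lerP (d_inf A B) (pers B)) => h.
    have hdv : d = d_inf A B by rewrite /d /d0 dinf_D0 min_l.
    have h1 : cm <= 1.
      rewrite /cm /cmin -/pA -/d ge_max ler01 /= ler_pdivrMr // mul1r.
      have := dinf_lowB A B; rewrite -/pA; lra.
    have h2 : 1 <= cM.
      rewrite /cM /cmax -/pA -/d ler_pdivlMr // mul1r.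
      have := dinf_lowA A B; rewrite -/pA; lra.
    have := inside 1 h1 h2.
    have -> : scale 1 A = A.
      rewrite /scale oner_eq0; elim: (A) => //= a s ->; congr (_ :: _).
      by case: a => x y /=; rewrite !mul1r.
    lra.
  have hdv : d = pers B by rewrite /d /d0 dinf_D0 min_r // ltW.
  have h1 : cm = 0 by rewrite /cm /cmin -/pA -/d hdv subrr mul0r maxxx.
  have := inside 0; rewrite h1 lexx /scale eqxx -/(D0 R) dinf_D0 => h2.
  have := h2 isT hcM0; lra.
have key c : 0 <= c -> dhat A B N <= d_inf (scale c A) B + delta.
  move=> hc.
  case: (lerP cm c) => h1; first case: (lerP c cM) => h2.
  - exact: inside.
  - have : d < d_inf (scale c A) B.
      have := dinf_lowA (scale c A) B; rewrite pers_scale // -/pA.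
      have : pers B + d < c * pA by rewrite -ltr_pdivrMr.
      lra.
    lra.
  - have : d < d_inf (scale c A) B.
      have := dinf_lowB (scale c A) B; rewrite pers_scale // -/pA.
      move: h1; rewrite /cm /cmin -/pA -/d lt_max ltNge hc /= ltr_pdivlMr // => h1.
      lra.
    lra.
have hdb c : 0 <= c -> dbar A B <= d_inf (scale c A) B.
  move=> hc; apply: ge_inf; last by exists c.
  by exists 0 => x [c' _ <-]; exact: dinf_ge0.
split.
  suff: dbar A B <= dhat A B N by lra.
  rewrite /dhat; apply: le_bigmin; first exact/hdb/tge0.
  by move=> i _; apply/hdb/tge0; rewrite -ltnS.
suff: dhat A B N - delta <= dbar A B by lra.
apply: lb_le_inf; first by exists (d_inf (scale 0 A) B); exists 0; first exact: lexx.
move=> x [c hc <-]; have := key c hc; lra.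
Qed.

End Main.

Unset Implicit Arguments.
Close Scope classical_set_scope.

Theorem mainTheorem5 (R : realType) (A B : seq (pt R)) (N : nat) :
  is_pd A -> is_pd B -> A != [::] -> (1 <= N)%N ->
  0 <= dhat A B N - dbar A B /\
  dhat A B N - dbar A B <= 2 * d0 A B * bd A / (N%:R * pers A).
Proof. exact: mainTheorem5'. Qed.
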